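(* Let $\mathcal{X},\mathcal{Y}$ be finite sets, $P_X$ a probability distribution on $\mathcal{X}$ and $d:\mathcal{X}\times\mathcal{Y}\to[0,\infty)$. For every code $\mathcal{C}\subset\mathcal{Y}$ with $M$ codewords, $$D(P_X,\mathcal{C})=\tilde D\big(M^{-1},Q_Y^{\mathcal{C}}\big),$$ where $Q_Y^{\mathcal{C}}$ is the uniform distribution on $\mathcal{C}$. In particular, $D(P_X,R)\ge\inf_{Q_Y}\tilde D(e^{-R},Q_Y)$, the infimum over all probability distributions $Q_Y$ on $\mathcal{Y}$.
   Context: $D(P_X,\mathcal{C})=\mathbb{E}_{P_X}[\min_{y\in\mathcal{C}}d(X,y)]$ and $D(P_X,R)=\min_{\mathcal{C}\subset\mathcal{Y}:|\mathcal{C}|=e^R}D(P_X,\mathcal{C})$. For a distribution $Q_Y$ on $\mathcal{Y}$: $p_{c,x,y,u}=Q_Y\{y': d(x,y')<d(x,y)\}+u\cdot Q_Y\{y': d(x,y')=d(x,y)\}$ and, for $w\in(0,1]$, $\tilde D(w,Q_Y)=w^{-1}\mathbb{E}[d(X,Y)\mathbf{1}\{p_{c,X,Y,U}\le w\}]$ with $X\sim P_X$, $Y\sim Q_Y$, $U$ uniform on $[0,1]$ independent. *)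

(* Defs.v *)
From HB Require Import structures.
From mathcomp Require Import all_boot all_order all_algebra.
From mathcomp Require Import all_classical all_reals all_analysis.
Set Implicit Arguments. Unset Strict Implicit. Unset Printing Implicit Defensive.
Import Order.TTheory GRing.Theory Num.Theory.
Local Open Scope classical_set_scope.
Local Open Scope ring_scope.

Section Defs.
Variables (R : realType) (X Y : finType).

Definition is_distr (T : finType) (P : T -> R) : Prop :=
  (forall t, 0 <= P t) /\ \sum_(t : T) P t = 1.

Definition Dcode (P : X -> R) (d : X -> Y -> R) (C : {set Y}) : R :=
  \sum_(x : X) P x * inf [set d x y | y in [set y | y \in C]].

Definition Drate (P : X -> R) (d : X -> Y -> R) (r : R) : R :=
  inf [set Dcode P d C | C in [set C : {set Y} | #|C|%:R = expR r]].

Definition Qlt (Q : Y -> R) (d : X -> Y -> R) (x : X) (y : Y) : R :=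
  \sum_(y' : Y | d x y' < d x y) Q y'.
Definition Qeq (Q : Y -> R) (d : X -> Y -> R) (x : X) (y : Y) : R :=
  \sum_(y' : Y | d x y' == d x y) Q y'.

Definition pc (Q : Y -> R) (d : X -> Y -> R) (x : X) (y : Y) (u : R) : R :=
  Qlt Q d x y + u * Qeq Q d x y.

Definition probU (Q : Y -> R) (d : X -> Y -> R) (x : X) (y : Y) (w : R) : R :=
  fine (@lebesgue_measure R [set u : R | 0 <= u <= 1 /\ pc Q d x y u <= w]).

(* tilde D(w, Q_Y) = w^{-1} E[ d(X,Y) 1{p_{c,X,Y,U} <= w} ],
   X ~ P, Y ~ Q, U ~ Unif[0,1] independent *)
Definition Dtilde (P : X -> R) (d : X -> Y -> R) (w : R) (Q : Y -> R) : R :=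
  w^-1 * \sum_(x : X) \sum_(y : Y) P x * Q y * d x y * probU Q d x y w.

Definition unif_code (C : {set Y}) : Y -> R :=
  fun y => if y \in C then (#|C|%:R)^-1 else 0.

End Defs.

(* Main.v *)
Require Import Defs.
From HB Require Import structures.
From mathcomp Require Import all_boot all_order all_algebra.
From mathcomp Require Import all_classical all_reals all_analysis.
From mathcomp Require Import ring lra.
Import Order.TTheory GRing.Theory Num.Theory.
Local Open Scope classical_set_scope.
Local Open Scope ring_scope.

Lemma probU_gen (R : realType) (a b w : R) : 0 < b -> w <= a + b ->
  fine (@lebesgue_measure R [set u : R | 0 <= u <= 1 /\ a + u * b <= w])
  = Num.max 0 ((w - a) / b).
Proof.
move=> b0 wab.
have t1 : (w - a) / b <= 1 by rewrite ler_pdivrMr // mul1r lerBlDl.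
have -> : [set u : R | 0 <= u <= 1 /\ a + u * b <= w] = `[0, (w - a) / b]%classic.
  apply/seteqP; split => u /=; rewrite in_itv /=.
    by move=> [/andP[-> _]]; rewrite -lerBrDl -ler_pdivlMr.
  move=> /andP[u0 ut]; rewrite u0 (le_trans ut t1); split => //.
  by rewrite -lerBrDl -ler_pdivlMr.
rewrite lebesgue_measure_itv /= lte_fin.
case: ifP => h /=.
  by rewrite subr0; apply/esym/max_idPr/ltW.
by apply/esym/max_idPl; rewrite leNgt h.
Qed.

Lemma unif_ge0 (R : realType) (Y : finType) (C : {set Y}) y : 0 <= unif_code R C y.
Proof. by rewrite /unif_code; case: ifP => // _; rewrite invr_ge0 ler0n. Qed.

Lemma sum_ge_one (R : realType) (Y : finType) (Q : Y -> R) (p : pred Y) y :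
  (forall y, 0 <= Q y) -> p y -> Q y <= \sum_(y' | p y') Q y'.
Proof.
move=> Q0 py; rewrite (bigD1 y) //= lerDl; exact: sumr_ge0.
Qed.

Lemma key (R : realType) (X Y : finType) (d : X -> Y -> R) (x : X)
  (C : {set Y}) (M : nat) : (0 < M)%N -> #|C| = M ->
  \sum_(y : Y) unif_code R C y * d x y * probU (unif_code R C) d x y (M%:R)^-1
  = (M%:R)^-1 * inf [set d x y | y in [set y | y \in C]].
Proof.
move=> M0 CM.
set Q := unif_code R C.
set w := (M%:R : R)^-1.
have w0 : 0 < w by rewrite invr_gt0 ltr0n.
have QC y : y \in C -> Q y = w by rewrite /Q /unif_code CM => ->.
have QnC y : y \notin C -> Q y = 0 by rewrite /Q /unif_code => /negbTE ->.
have Q0 := @unif_ge0 R Y C.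
have [y1 y1C] : exists y1, y1 \in C.
  by apply/card_gt0P; rewrite CM.
case: (@arg_minP _ _ _ y1 (mem C) (d x) y1C) => y0 y0C y0min.
have -> : inf [set d x y | y in [set y | y \in C]] = d x y0.
  apply/le_anti/andP; split.
    apply: (ge_inf); last by exists y0.
    by exists (d x y0) => _ [y /= yC <-]; exact: y0min.
  apply: lb_le_inf; first by exists (d x y0), y0.
  by move=> _ [y /= yC <-]; exact: y0min.
set q := \sum_(y' | d x y' == d x y0) Q y'.
have wq : w <= q by rewrite -(QC y0 y0C); apply: sum_ge_one.
have q0 : 0 < q by apply: lt_le_trans wq.
have pU y : y \in C -> probU Q d x y w =
   if d x y == d x y0 then w / q else 0.
  move=> yC; rewrite /probU /pc.
  have Qe : w <= Qeq Q d x y by rewrite /Qeq -(QC y yC); apply: sum_ge_one.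
  have Ql : 0 <= Qlt Q d x y by apply: sumr_ge0.
  rewrite probU_gen; first last.
  - by rewrite -[w]add0r lerD.
  - by apply: lt_le_trans Qe.
  case: ifP => /eqP e.
    have -> : Qlt Q d x y = 0.
      apply: big1 => y' lt; apply: QnC; apply/negP => y'C.
      by have := y0min y' y'C; rewrite leNgt -e lt.
    have -> : Qeq Q d x y = q by rewrite /Qeq /q e.
    by rewrite subr0; apply/max_idPr; rewrite divr_ge0 // ltW.
  apply/max_idPl; rewrite pmulr_lle0 ?invr_gt0; last by apply: lt_le_trans Qe.
  rewrite subr_le0 -(QC y0 y0C); apply: sum_ge_one => //.
  by rewrite lt_neqAle y0min // andbT; apply/eqP => /esym.
transitivity (\sum_(y : Y) if d x y == d x y0 then Q y * (d x y0 * (w / q)) else 0).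
  apply: eq_bigr => y _.
  case: (boolP (y \in C)) => yC; last by rewrite QnC // !mul0r; case: ifP.
  rewrite pU //; case: ifP => [/eqP ->|_]; first by rewrite mulrA.
  by rewrite mulr0.
rewrite -big_mkcond /= -mulr_suml -/q.
field; exact: lt0r_neq0.
Qed.

Theorem theorem2 (R : realType) (X Y : finType) (P : X -> R) (d : X -> Y -> R) :
  is_distr P -> (forall x y, 0 <= d x y) ->
  (forall (C : {set Y}) (M : nat), (0 < M)%N -> #|C| = M ->
     Dcode P d C = Dtilde P d (M%:R)^-1 (unif_code R C))
  /\
  (forall r : R, (exists C : {set Y}, #|C|%:R = expR r) ->
     Drate P d r >= inf [set Dtilde P d (expR (- r)) Q | Q in [set Q : Y -> R | is_distr Q]]).
Proof.
move=> [P0 P1] d0.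
have part1 : forall (C : {set Y}) (M : nat), (0 < M)%N -> #|C| = M ->
     Dcode P d C = Dtilde P d (M%:R)^-1 (unif_code R C).
  move=> C M M0 CM; rewrite /Dtilde /Dcode invrK mulr_sumr.
  apply: eq_bigr => x _.
  under eq_bigr => y _ do rewrite -!mulrA.
  rewrite -mulr_sumr.
  under eq_bigr => y _ do rewrite !mulrA.
  rewrite (@key R X Y d x C M M0 CM).
  have : (M%:R : R) != 0 by rewrite pnatr_eq0 -lt0n.
  move=> Mn0; field; exact: Mn0.
split => // r [C0 C0r].
apply: lb_le_inf; first by exists (Dcode P d C0), C0.
move=> _ [C /= Cr <-].
have M0 : (0 < #|C|)%N by rewrite -(ltr0n R) Cr expR_gt0.
rewrite (part1 C #|C| M0 erefl).
apply: ge_inf; last first.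
  exists (unif_code R C); last by rewrite expRN -Cr.
  split; first exact: unif_ge0.
  rewrite /unif_code -big_mkcond /= sumr_const -mulr_natr.
  have : (#|C|%:R : R) != 0 by rewrite pnatr_eq0 -lt0n.
  by move=> Mn0; field.
exists 0 => _ [Q [Q0 _] <-].
rewrite /Dtilde mulr_ge0 // ?invr_ge0 ?expR_ge0 //.
apply: sumr_ge0 => x _; apply: sumr_ge0 => y _.
by rewrite !mulr_ge0 // fine_ge0 // measure_ge0.
Qed.
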